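(* In the social learning model, assume there exist $c>0$, $k>0$ and $x_0>0$ such that $G_-(-x)=c\,x^{-k}$ and $G_+(x)=1-c\,x^{-k}$ for all $x>x_0$. Then there exists $X>0$ such that for all $x\ge X$, $$|x+D_-(x)|\le x\qquad\text{and}\qquad |{-x}+D_+(-x)|\le x.$$ Equivalently, for every $t$, if $|\ell_t|\ge X$ and the action $a_t$ disagrees with the sign of $\ell_t$ (i.e., $a_t\ne a_{t-1}$, where $\ell_t$ has the sign of $a_{t-1}$), then $|\ell_{t+1}|\le|\ell_t|$.
   Context: Social learning model. A state $\theta\in\{-1,+1\}$ is drawn with $\mathbb{P}(\theta=+1)=\mathbb{P}(\theta=-1)=1/2$. Agents $t=1,2,\dots$ receive private signals $s_t\in\mathbb{R}$ that are i.i.d. conditionally on $\theta$, with CDF $F_+$ if $\theta=+1$ and $F_-$ if $\theta=-1$; $F_+$ and $F_-$ are mutually absolutely continuous. Let $L_t=\log\frac{\mathbb{P}(\theta=+1\mid s_t)}{\mathbb{P}(\theta=-1\mid s_t)}$ be the private log-likelihood ratio, and let $G_+$, $G_-$ denote the CDFs of $L_t$ conditional on $\theta=+1$, $\theta=-1$ respectively. Signals are assumed unbounded: for every $M\in\mathbb{R}$, $\mathbb{P}(L_t>M)>0$ and $\mathbb{P}(L_t<-M)>0$. Agent $t$ observes $a_1,\dots,a_{t-1}$ and her own signal and chooses $a_t\in\{-1,+1\}$ (utility $1$ if $a_t=\theta$, else $0$). The public belief is $\mu_t=\mathbb{P}(\theta=+1\mid a_1,\dots,a_{t-1})$ and $\ell_t=\log\frac{\mu_t}{1-\mu_t}$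 (so $\ell_1=0$). In equilibrium $a_t=+1$ iff $\ell_t+L_t>0$, and otherwise $a_t=-1$. Consequently $\ell_{t+1}=\ell_t+D_+(\ell_t)$ if $a_t=+1$ and $\ell_{t+1}=\ell_t+D_-(\ell_t)$ if $a_t=-1$, where $D_+(x)=\log\frac{1-G_+(-x)}{1-G_-(-x)}$ and $D_-(x)=\log\frac{G_+(-x)}{G_-(-x)}$. We write $\mathbb{P}_+(\cdot)=\mathbb{P}(\cdot\mid\theta=+1)$ and $\mathbb{E}_+$ for the corresponding expectation. *)

(* Defs.v *)
From Stdlib Require Import Reals Lra.
Open Scope R_scope.

Definition is_CDF (G : R -> R) : Prop :=
  (forall x y, x <= y -> G x <= G y) /\
  (forall x eps, 0 < eps -> exists d, 0 < d /\
      forall y, x <= y < x + d -> Rabs (G y - G x) < eps) /\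
  (forall eps, 0 < eps -> exists M, forall x, x <= M -> Rabs (G x) < eps) /\
  (forall eps, 0 < eps -> exists M, forall x, M <= x -> Rabs (G x - 1) < eps).

(* (Gp, Gm) are the conditional CDFs (given theta = +1 / theta = -1) of the
   private log-likelihood ratio L = log dF_+/dF_-(s) with uniform prior.
   This is characterized by: both are CDFs and the law of L under theta=+1
   has density e^y with respect to its law under theta=-1, i.e. for every
   interval (a,b],  P_+(a<L<=b) = int_(a,b] e^y dP_-(y), which (for all
   intervals) is equivalent to the two-sided bounds below. *)
Definition LLR_CDFs (Gp Gm : R -> R) : Prop :=
  is_CDF Gp /\ is_CDF Gm /\
  (forall a b, a < b ->
     exp a * (Gm b - Gm a) <= Gp b - Gp a /\
     Gp b - Gp a <= exp b * (Gm b - Gm a)).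

(* Unbounded signals: P(L > M) > 0 and P(L < -M) > 0 for every M,
   where P = (P_+ + P_-)/2 is the unconditional law. *)
Definition unbounded_signals (Gp Gm : R -> R) : Prop :=
  forall M : R,
    0 < (1 - Gp M) + (1 - Gm M) /\
    exists y, y < - M /\ 0 < Gp y + Gm y.

Definition D_plus (Gp Gm : R -> R) (x : R) : R :=
  ln ((1 - Gp (- x)) / (1 - Gm (- x))).
Definition D_minus (Gp Gm : R -> R) (x : R) : R :=
  ln (Gp (- x) / Gm (- x)).

(* Main.v *)
Require Import Defs.
From Stdlib Require Import Reals.
From Stdlib Require Import Lra.
Open Scope R_scope.

Lemma cdf_ge0 G : is_CDF G -> forall a, 0 <= G a.
Proof.
  intros [Hm [_ [H0 _]]] a.
  destruct (Rle_or_lt 0 (G a)) as [h|h]; auto.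
  destruct (H0 (- G a)) as [M HM]; [lra|].
  pose (y := Rmin M a).
  assert (y <= M) by apply Rmin_l. assert (y <= a) by apply Rmin_r.
  specialize (HM y H). specialize (Hm y a H1).
  apply Rabs_def2 in HM. lra.
Qed.

Lemma cdf_le1 G : is_CDF G -> forall a, G a <= 1.
Proof.
  intros [Hm [_ [_ H1]]] a.
  destruct (Rle_or_lt (G a) 1) as [h|h]; auto.
  destruct (H1 (G a - 1)) as [M HM]; [lra|].
  pose (y := Rmax M a).
  assert (M <= y) by apply Rmax_l. assert (a <= y) by apply Rmax_r.
  specialize (HM y H). specialize (Hm a y H0).
  apply Rabs_def2 in HM. lra.
Qed.

Lemma bound_left Gp Gm : LLR_CDFs Gp Gm -> forall b, Gp b <= exp b * Gm b.
Proof.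
  intros [Cp [Cm L]] b.
  destruct (Rle_or_lt (Gp b) (exp b * Gm b)) as [h|h]; auto.
  destruct Cp as [Hm [Hr [H0 H1]]].
  destruct (H0 (Gp b - exp b * Gm b)) as [M HM]; [lra|].
  pose (y := Rmin M (b - 1)).
  assert (y <= M) by apply Rmin_l. assert (y <= b - 1) by apply Rmin_r.
  specialize (HM y H). apply Rabs_def2 in HM.
  destruct (L y b) as [_ L2]; [lra|].
  assert (0 <= exp b * Gm y).
  { apply Rmult_le_pos; [left; apply exp_pos | apply (cdf_ge0 Gm Cm)]. }
  lra.
Qed.

Lemma bound_right Gp Gm : LLR_CDFs Gp Gm -> forall a, exp a * (1 - Gm a) <= 1 - Gp a.
Proof.
  intros [Cp [Cm L]] a.
  destruct (Rle_or_lt (exp a * (1 - Gm a)) (1 - Gp a)) as [h|h]; auto.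
  pose (eps := exp a * (1 - Gm a) - (1 - Gp a)).
  assert (ea : 0 < exp a) by apply exp_pos.
  destruct Cm as [Hm [Hr [H0 H1]]].
  destruct (H1 (eps / (2 * exp a))) as [M HM].
  { unfold eps; apply Rdiv_lt_0_compat; lra. }
  pose (y := Rmax M (a + 1)).
  assert (M <= y) by apply Rmax_l. assert (a + 1 <= y) by apply Rmax_r.
  specialize (HM y H). apply Rabs_def2 in HM.
  destruct (L a y) as [L1 _]; [lra|].
  assert (Gp y <= 1) by apply (cdf_le1 Gp Cp).
  assert (exp a * (1 - Gm y) < eps / 2).
  { replace (eps / 2) with (exp a * (eps / (2 * exp a))) by (field; lra).
    apply Rmult_lt_compat_l; lra. }
  unfold eps in *. lra.
Qed.

Lemma ln_range lo hi r : 0 < lo -> lo <= r <= hi -> ln lo <= ln r <= ln hi.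
Proof.
  intros h [h1 h2]. split.
  - destruct h1 as [l|e]; [left; apply ln_increasing; lra | rewrite e; lra].
  - destruct h2 as [l|e]; [left; apply ln_increasing; lra | rewrite e; lra].
Qed.

Theorem lemma10 (Gp Gm : R -> R) (c k x0 : R) :
  LLR_CDFs Gp Gm ->
  unbounded_signals Gp Gm ->
  0 < c -> 0 < k -> 0 < x0 ->
  (forall x, x0 < x -> Gm (- x) = c * Rpower x (- k)) ->
  (forall x, x0 < x -> Gp x = 1 - c * Rpower x (- k)) ->
  exists X, 0 < X /\
    forall x, X <= x ->
      Rabs (x + D_minus Gp Gm x) <= x /\
      Rabs (- x + D_plus Gp Gm (- x)) <= x.
Proof.
  intros HL _ hc hk hx0 HGm HGp.
  pose (q := Rpower (3/2) (- k)).
  assert (hq : q < 1).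
  { unfold q. rewrite <- (Rpower_O (3/2)) by lra. apply Rpower_lt; lra. }
  assert (hq0 : 0 < q) by (unfold q, Rpower; apply exp_pos).
  pose (d := 1 - q).
  assert (hd : 0 < d) by (unfold d; lra).
  exists (Rmax (x0 + 1) (- 2 * ln d)). split.
  { apply Rlt_le_trans with (x0 + 1); [lra | apply Rmax_l]. }
  intros x hx.
  assert (h1 : x0 + 1 <= x) by (eapply Rle_trans; [apply Rmax_l | exact hx]).
  assert (h2 : - 2 * ln d <= x) by (eapply Rle_trans; [apply Rmax_r | exact hx]).
  assert (F : exp (- x / 2) <= d).
  { rewrite <- (exp_ln d hd).
    destruct (Rle_lt_or_eq_dec (- x / 2) (ln d)) as [l|e]; [lra| |].
    - left; apply exp_increasing; exact l.
    - rewrite e; lra. }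
  assert (E1 : exp (- x / 2) * exp (x / 2) = 1).
  { rewrite <- exp_plus. replace (- x / 2 + x / 2) with 0 by lra. apply exp_0. }
  assert (hxp : 0 < x) by lra.
  pose (m := c * Rpower x (- k)).
  assert (hm : 0 < m) by (unfold m, Rpower; apply Rmult_lt_0_compat; [lra|apply exp_pos]).
  assert (Hq : c * Rpower (3/2 * x) (- k) = q * m).
  { unfold m, q. rewrite <- Rpower_mult_distr by lra. ring. }
  destruct HL as [Cp [Cm L]].
  assert (HL : LLR_CDFs Gp Gm) by (split; [exact Cp | split; [exact Cm | exact L]]).
  assert (ex : 0 < exp (x/2)) by apply exp_pos.
  assert (ex2 : 0 < exp (- x/2)) by apply exp_pos.
  split.
  -
    unfold D_minus.
    assert (Gmx : Gm (- x) = m) by (apply HGm; lra).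
    assert (Gm15 : Gm (- (3/2 * x)) = q * m) by (rewrite HGm by nra; exact Hq).
    assert (A : Gp (- x) <= exp (- x) * m) by (rewrite <- Gmx; apply bound_left; exact HL).
    assert (B : exp (- (3/2 * x)) * (d * m) <= Gp (- x)).
    { destruct (L (- (3/2 * x)) (- x)) as [B1 _]; [nra|].
      rewrite Gmx, Gm15 in B1. pose proof (cdf_ge0 Gp Cp (- (3/2*x))).
      unfold d. nra. }
    assert (e2 : exp (- (2 * x)) = exp (- (3/2 * x)) * exp (- x / 2)).
    { rewrite <- exp_plus. f_equal. lra. }
    assert (e15 : 0 < exp (- (3/2 * x))) by apply exp_pos.
    pose (r := Gp (- x) / m).
    assert (rm : Gp (- x) = r * m) by (unfold r; field; lra).
    assert (R1 : exp (- (2 * x)) <= r).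
    { rewrite e2. apply Rmult_le_reg_r with m; [lra|].
      rewrite <- rm. eapply Rle_trans; [|exact B].
      rewrite Rmult_assoc. apply Rmult_le_compat_l; [lra|].
      apply Rmult_le_compat_r; lra. }
    assert (R2 : r <= exp (- x)).
    { apply Rmult_le_reg_r with m; [lra|]. rewrite <- rm. exact A. }
    rewrite Gmx. fold r.
    destruct (ln_range _ _ r (exp_pos _) (conj R1 R2)) as [l1 l2].
    rewrite !ln_exp in *.
    apply Rabs_le. lra.
  -
    unfold D_plus. rewrite Ropp_involutive.
    assert (Gpx : Gp x = 1 - m) by (apply HGp; lra).
    assert (Gp15 : Gp (3/2 * x) = 1 - q * m) by (rewrite HGp by nra; rewrite Hq; ring).
    assert (C : exp x * (1 - Gm x) <= m).
    { pose proof (bound_right Gp Gm HL x). lra. }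
    assert (D : d * m <= exp (3/2 * x) * (1 - Gm x)).
    { destruct (L x (3/2 * x)) as [_ D1]; [nra|].
      rewrite Gpx, Gp15 in D1. pose proof (cdf_le1 Gm Cm (3/2*x)).
      pose proof (exp_pos (3/2 * x)). unfold d. nra. }
    assert (e15 : 0 < exp (3/2 * x)) by apply exp_pos.
    assert (hv : 0 < 1 - Gm x) by nra.
    pose (v := 1 - Gm x).
    fold v in C, D, hv.
    pose (r := (1 - Gp x) / v).
    assert (rm : 1 - Gp x = r * v) by (unfold r; field; lra).
    assert (e2 : exp (2 * x) = exp (3/2 * x) * exp (x / 2)).
    { rewrite <- exp_plus. f_equal. lra. }
    assert (R1 : exp x <= r).
    { apply Rmult_le_reg_r with v; [lra|]. rewrite <- rm. lra. }
    assert (E : 1 <= d * exp (x / 2)).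
    { rewrite <- E1. apply Rmult_le_compat_r; lra. }
    assert (R2 : r <= exp (2 * x)).
    { apply Rmult_le_reg_r with v; [lra|]. rewrite <- rm, e2.
      apply Rle_trans with (d * exp (x/2) * m); [nra|].
      replace (d * exp (x / 2) * m) with (exp (x/2) * (d * m)) by ring.
      replace (exp (3 / 2 * x) * exp (x / 2) * v) with (exp (x/2) * (exp (3/2*x) * v)) by ring.
      apply Rmult_le_compat_l; lra. }
    change ((1 - Gp x) / (1 - Gm x)) with ((1 - Gp x) / v). fold r.
    destruct (ln_range _ _ r (exp_pos _) (conj R1 R2)) as [l1 l2].
    rewrite !ln_exp in *.
    apply Rabs_le. lra.
Qed.
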